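(* Let $\mathcal{K}$ be an autonomous 2-category and $\mathcal{E}$ an autonomous monoidal category. For any pair of pseudofunctors $\mathcal{F},\mathcal{G}:Del(\mathcal{E})\to\mathcal{K}$ the weak and strong centers coincide, and the inverse of a left half-braiding is a right half-braiding; that is, $\mathcal{Z}^{w\text{-}ps}_l(\mathcal{F},\mathcal{K},\mathcal{G})=\mathcal{Z}^{s\text{-}ps}_l(\mathcal{F},\mathcal{K},\mathcal{G})\cong\mathcal{Z}^{s\text{-}ps}_r(\mathcal{F},\mathcal{K},\mathcal{G})=\mathcal{Z}^{w\text{-}ps}_r(\mathcal{F},\mathcal{K},\mathcal{G})$, where the isomorphism sends $(M,\sigma)$ to $(M,\sigma^{-1})$.
   Context: A 2-category is autonomous if every 1-cell has a left and a right adjoint; a monoidal category is autonomous if every object has a left and a right dual (equivalently, its delooping is an autonomous 2-category). $Del(\mathcal{E})$ is the one-object bicategory with hom-category $\mathcal{E}$ and horizontal composition $\otimes$; write $\mathcal{F}(X)=\mathcal{F}_{*,*}(X)$. For pseudofunctors $\mathcal{F},\mathcal{G}$ (regarded via their lax structures $\mathcal{F}^2,\mathcal{F}^0$): $\mathcal{Z}^{w\text{-}ps}_l(\mathcal{F},\mathcal{K},\mathcal{G})$ is the category of colax natural transformations $\mathcal{F}\Rightarrow\mathcal{G}$ and modifications, i.e. pairs $(M,\sigma)$ with $M:\mathcal{F}( * )\to\mathcal{G}( * )$ and $\sigma_X:M\circ\mathcal{F}(X)\Rightarrow\mathcal{G}(X)\circ M$ natural in $X$ with $(\mathcal{G}^2_{Y,X}\circ1_M)\cdot(1\circ\sigma_X)\cdot(\sigma_Y\circ1)=\sigma_{Y\otimes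 X}\cdot(1_M\circ\mathcal{F}^2_{Y,X})$, $\sigma_I\cdot(1_M\circ\mathcal{F}^0)=\mathcal{G}^0\circ1_M$, and morphisms 2-cells $f:M\Rightarrow N$ with $(1\circ f)\cdot\sigma_X=\tau_X\cdot(f\circ1)$. $\mathcal{Z}^{w\text{-}ps}_r(\mathcal{F},\mathcal{K},\mathcal{G})$ is the category of lax natural transformations, i.e. pairs $(M,\tilde\sigma)$ with $\tilde\sigma_X:\mathcal{G}(X)\circ M\Rightarrow M\circ\mathcal{F}(X)$ natural with $\tilde\sigma_{Y\otimes X}\cdot(\mathcal{G}^2_{Y,X}\circ1_M)=(1_M\circ\mathcal{F}^2_{Y,X})\cdot(\tilde\sigma_Y\circ1)\cdot(1\circ\tilde\sigma_X)$, $\tilde\sigma_I\cdot(\mathcal{G}^0\circ1_M)=1_M\circ\mathcal{F}^0$, and morphisms $f$ with $(f\circ1)\cdot\tilde\sigma_X=\tilde\tau_X\cdot(1\circ f)$. The superscript $s$ denotes the full subcategories where the half-braidings $\sigma$ (resp. $\tilde\sigma$) are invertible. *)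

(* Defs.v *)
Set Implicit Arguments.
Unset Strict Implicit.

(* comp g f = g o f.                                                    *)
Record MonCat := {
  ob :> Type;
  hom : ob -> ob -> Type;
  comp : forall {a b c : ob}, hom b c -> hom a b -> hom a c;
  idm : forall a : ob, hom a a;
  comp_assoc : forall a b c d (h : hom c d) (g : hom b c) (f : hom a b),
      comp h (comp g f) = comp (comp h g) f;
  comp_id_l : forall a b (f : hom a b), comp (idm b) f = f;
  comp_id_r : forall a b (f : hom a b), comp f (idm a) = f;
  tens : ob -> ob -> ob;
  tensm : forall {a a' b b' : ob}, hom a a' -> hom b b' -> hom (tens a b) (tens a' b');
  tensm_id : forall a b, tensm (idm a) (idm b) = idm (tens a b);
  tensm_comp : forall a a' a'' b b' b'' (g : hom a' a'') (f : hom a a')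
      (g' : hom b' b'') (f' : hom b b'),
      tensm (comp g f) (comp g' f') = comp (tensm g g') (tensm f f');
  munit : ob;
  massoc : forall a b c, hom (tens (tens a b) c) (tens a (tens b c));
  massoc_inv : forall a b c, hom (tens a (tens b c)) (tens (tens a b) c);
  massoc_iso1 : forall a b c, comp (massoc_inv a b c) (massoc a b c) = idm _;
  massoc_iso2 : forall a b c, comp (massoc a b c) (massoc_inv a b c) = idm _;
  massoc_nat : forall a a' b b' c c' (f : hom a a') (g : hom b b') (h : hom c c'),
      comp (massoc a' b' c') (tensm (tensm f g) h)
      = comp (tensm f (tensm g h)) (massoc a b c);
  mlun : forall a, hom (tens munit a) a;
  mlun_inv : forall a, hom a (tens munit a);
  mlun_iso1 : forall a, comp (mlun_inv a) (mlun a) = idm _;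
  mlun_iso2 : forall a, comp (mlun a) (mlun_inv a) = idm _;
  mlun_nat : forall a a' (f : hom a a'),
      comp (mlun a') (tensm (idm munit) f) = comp f (mlun a);
  mrun : forall a, hom (tens a munit) a;
  mrun_inv : forall a, hom a (tens a munit);
  mrun_iso1 : forall a, comp (mrun_inv a) (mrun a) = idm _;
  mrun_iso2 : forall a, comp (mrun a) (mrun_inv a) = idm _;
  mrun_nat : forall a a' (f : hom a a'),
      comp (mrun a') (tensm f (idm munit)) = comp f (mrun a);
  mpentagon : forall a b c d,
      comp (massoc a b (tens c d)) (massoc (tens a b) c d)
      = comp (tensm (idm a) (massoc b c d))
             (comp (massoc a (tens b c) d) (tensm (massoc a b c) (idm d)));
  mtriangle : forall a b,
      comp (tensm (idm a) (mlun b)) (massoc a munit b) = tensm (mrun a) (idm b)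
}.

Arguments munit {m}.

(* Bicategories.  vcomp b a = b . a (vertical), hcomp1 g f = g o f,    *)
(* hcomp2 b a = b o a (horizontal composition of 2-cells).             *)
Record Bicat := {
  obK :> Type;
  c1 : obK -> obK -> Type;
  c2 : forall {a b : obK}, c1 a b -> c1 a b -> Type;
  vcomp : forall {a b} {f g h : c1 a b}, c2 g h -> c2 f g -> c2 f h;
  id2 : forall {a b} (f : c1 a b), c2 f f;
  vcomp_assoc : forall a b (f g h k : c1 a b) (z : c2 h k) (y : c2 g h) (x : c2 f g),
      vcomp z (vcomp y x) = vcomp (vcomp z y) x;
  vcomp_id_l : forall a b (f g : c1 a b) (x : c2 f g), vcomp (id2 g) x = x;
  vcomp_id_r : forall a b (f g : c1 a b) (x : c2 f g), vcomp x (id2 f) = x;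
  id1 : forall a : obK, c1 a a;
  hcomp1 : forall {a b c : obK}, c1 b c -> c1 a b -> c1 a c;
  hcomp2 : forall {a b c} {g g' : c1 b c} {f f' : c1 a b},
      c2 g g' -> c2 f f' -> c2 (hcomp1 g f) (hcomp1 g' f');
  hcomp2_id : forall a b c (g : c1 b c) (f : c1 a b),
      hcomp2 (id2 g) (id2 f) = id2 (hcomp1 g f);
  interchange : forall a b c (g g' g'' : c1 b c) (f f' f'' : c1 a b)
      (y' : c2 g' g'') (y : c2 g g') (x' : c2 f' f'') (x : c2 f f'),
      hcomp2 (vcomp y' y) (vcomp x' x) = vcomp (hcomp2 y' x') (hcomp2 y x);
  assoc2 : forall {a b c d} (h : c1 c d) (g : c1 b c) (f : c1 a b),
      c2 (hcomp1 (hcomp1 h g) f) (hcomp1 h (hcomp1 g f));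
  assoc2_inv : forall {a b c d} (h : c1 c d) (g : c1 b c) (f : c1 a b),
      c2 (hcomp1 h (hcomp1 g f)) (hcomp1 (hcomp1 h g) f);
  assoc2_iso1 : forall a b c d (h : c1 c d) (g : c1 b c) (f : c1 a b),
      vcomp (assoc2_inv h g f) (assoc2 h g f) = id2 _;
  assoc2_iso2 : forall a b c d (h : c1 c d) (g : c1 b c) (f : c1 a b),
      vcomp (assoc2 h g f) (assoc2_inv h g f) = id2 _;
  assoc2_nat : forall a b c d (h h' : c1 c d) (g g' : c1 b c) (f f' : c1 a b)
      (z : c2 h h') (y : c2 g g') (x : c2 f f'),
      vcomp (assoc2 h' g' f') (hcomp2 (hcomp2 z y) x)
      = vcomp (hcomp2 z (hcomp2 y x)) (assoc2 h g f);
  lun2 : forall {a b} (f : c1 a b), c2 (hcomp1 (id1 b) f) f;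
  lun2_inv : forall {a b} (f : c1 a b), c2 f (hcomp1 (id1 b) f);
  lun2_iso1 : forall a b (f : c1 a b), vcomp (lun2_inv f) (lun2 f) = id2 _;
  lun2_iso2 : forall a b (f : c1 a b), vcomp (lun2 f) (lun2_inv f) = id2 _;
  lun2_nat : forall a b (f f' : c1 a b) (x : c2 f f'),
      vcomp (lun2 f') (hcomp2 (id2 (id1 b)) x) = vcomp x (lun2 f);
  run2 : forall {a b} (f : c1 a b), c2 (hcomp1 f (id1 a)) f;
  run2_inv : forall {a b} (f : c1 a b), c2 f (hcomp1 f (id1 a));
  run2_iso1 : forall a b (f : c1 a b), vcomp (run2_inv f) (run2 f) = id2 _;
  run2_iso2 : forall a b (f : c1 a b), vcomp (run2 f) (run2_inv f) = id2 _;
  run2_nat : forall a b (f f' : c1 a b) (x : c2 f f'),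
      vcomp (run2 f') (hcomp2 x (id2 (id1 a))) = vcomp x (run2 f);
  pentagon2 : forall a b c d e (k : c1 d e) (h : c1 c d) (g : c1 b c) (f : c1 a b),
      vcomp (assoc2 k h (hcomp1 g f)) (assoc2 (hcomp1 k h) g f)
      = vcomp (hcomp2 (id2 k) (assoc2 h g f))
              (vcomp (assoc2 k (hcomp1 h g) f) (hcomp2 (assoc2 k h g) (id2 f)));
  triangle2 : forall a b c (g : c1 b c) (f : c1 a b),
      vcomp (hcomp2 (id2 g) (lun2 f)) (assoc2 g (id1 b) f) = hcomp2 (run2 g) (id2 f)
}.

(* A 2-category = a bicategory whose composition of 1-cells is strictly
   associative and unital, with associator and unitors the identity 2-cells
   (transported along these equalities of 1-cells). *)
Definition idtoiso2 {K : Bicat} {a b : K} {f g : c1 a b} (e : f = g) : c2 f g :=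
  match e in _ = g' return c2 f g' with eq_refl => id2 f end.

Definition is_strict2 (K : Bicat) : Prop :=
  exists (ea : forall (a b c d : K) (h : c1 c d) (g : c1 b c) (f : c1 a b),
                 hcomp1 (hcomp1 h g) f = hcomp1 h (hcomp1 g f))
         (el : forall (a b : K) (f : c1 a b), hcomp1 (id1 b) f = f)
         (er : forall (a b : K) (f : c1 a b), hcomp1 f (id1 a) = f),
    (forall a b c d (h : c1 c d) (g : c1 b c) (f : c1 a b),
        assoc2 h g f = idtoiso2 (ea a b c d h g f)) /\
    (forall a b (f : c1 a b), lun2 f = idtoiso2 (el a b f)) /\
    (forall a b (f : c1 a b), run2 f = idtoiso2 (er a b f)).

Definition inverse2 {K : Bicat} {a b : K} {f g : c1 a b} (x : c2 f g) (y : c2 g f) : Prop :=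
  vcomp y x = id2 f /\ vcomp x y = id2 g.
Definition iso2 {K : Bicat} {a b : K} {f g : c1 a b} (x : c2 f g) : Prop :=
  exists y : c2 g f, inverse2 x y.

Definition is_adjunction {K : Bicat} {a b : K} (l : c1 a b) (r : c1 b a)
    (eta : c2 (id1 a) (hcomp1 r l)) (eps : c2 (hcomp1 l r) (id1 b)) : Prop :=
  vcomp (lun2 l) (vcomp (hcomp2 eps (id2 l)) (vcomp (assoc2_inv l r l)
     (vcomp (hcomp2 (id2 l) eta) (run2_inv l)))) = id2 l /\
  vcomp (run2 r) (vcomp (hcomp2 (id2 r) eps) (vcomp (assoc2 r l r)
     (vcomp (hcomp2 eta (id2 r)) (lun2_inv r)))) = id2 r.

Arguments is_adjunction {K a b} l r eta eps.

Definition autonomous_bicat (K : Bicat) : Prop :=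
  forall (a b : K) (f : c1 a b),
    (exists (r : c1 b a) eta eps, is_adjunction f r eta eps) /\
    (exists (l : c1 b a) eta eps, is_adjunction l f eta eps).

(* duality in a monoidal category = adjunction in its delooping Del(E),
   whose 1-cell composition is Y o X := Y (x) X *)
Definition is_duality {E : MonCat} (l r : E)
    (eta : hom munit (tens r l)) (eps : hom (tens l r) munit) : Prop :=
  comp (mlun l) (comp (tensm eps (idm l)) (comp (massoc_inv l r l)
     (comp (tensm (idm l) eta) (mrun_inv l)))) = idm l /\
  comp (mrun r) (comp (tensm (idm r) eps) (comp (massoc r l r)
     (comp (tensm eta (idm r)) (mlun_inv r)))) = idm r.

Arguments is_duality {E} l r eta eps.

Definition autonomous_moncat (E : MonCat) : Prop :=
  forall X : E,
    (exists (r : E) eta eps, is_duality X r eta eps) /\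
    (exists (l : E) eta eps, is_duality l X eta eps).

(* Pseudofunctors Del(E) -> K.  Fob = F( * ), Fm X = F(X),             *)
Record PseudoFun (E : MonCat) (K : Bicat) := {
  Fob : K;
  Fm : E -> c1 Fob Fob;
  Ff : forall {X Y : E}, hom X Y -> c2 (Fm X) (Fm Y);
  Ff_id : forall X, Ff (idm X) = id2 (Fm X);
  Ff_comp : forall X Y Z (g : hom Y Z) (f : hom X Y), Ff (comp g f) = vcomp (Ff g) (Ff f);
  F2 : forall Y X : E, c2 (hcomp1 (Fm Y) (Fm X)) (Fm (tens Y X));
  F2_nat : forall Y Y' X X' (g : hom Y Y') (f : hom X X'),
      vcomp (Ff (tensm g f)) (F2 Y X) = vcomp (F2 Y' X') (hcomp2 (Ff g) (Ff f));
  F0 : c2 (id1 Fob) (Fm munit);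
  F2_iso : forall Y X, iso2 (F2 Y X);
  F0_iso : iso2 F0;
  F_assoc : forall Z Y X,
      vcomp (Ff (massoc Z Y X)) (vcomp (F2 (tens Z Y) X) (hcomp2 (F2 Z Y) (id2 (Fm X))))
      = vcomp (F2 Z (tens Y X)) (vcomp (hcomp2 (id2 (Fm Z)) (F2 Y X))
                                      (assoc2 (Fm Z) (Fm Y) (Fm X)));
  F_lunit : forall X,
      vcomp (Ff (mlun X)) (vcomp (F2 munit X) (hcomp2 F0 (id2 (Fm X)))) = lun2 (Fm X);
  F_runit : forall X,
      vcomp (Ff (mrun X)) (vcomp (F2 X munit) (hcomp2 (id2 (Fm X)) F0)) = run2 (Fm X)
}.

Arguments Fob {E K}. Arguments Fm {E K}. Arguments Ff {E K} p {X Y}.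
Arguments F2 {E K}. Arguments F0 {E K}.

Section Centers.
Context {E : MonCat} {K : Bicat} (F G : PseudoFun E K).

(* Objects of Z^{w-ps}_l(F,K,G): (M, sigma), sigma_X : M o F(X) => G(X) o M
   (colax natural transformations F => G); associators of K are made
   explicit (they are identities when K is a 2-category). *)
Definition left_halfbraiding (M : c1 (Fob F) (Fob G))
    (s : forall X : E, c2 (hcomp1 M (Fm F X)) (hcomp1 (Fm G X) M)) : Prop :=
  (forall X Y (f : hom X Y),
      vcomp (hcomp2 (Ff G f) (id2 M)) (s X) = vcomp (s Y) (hcomp2 (id2 M) (Ff F f))) /\
  (forall Y X,
      vcomp (hcomp2 (F2 G Y X) (id2 M)) (vcomp (assoc2_inv (Fm G Y) (Fm G X) M)
        (vcomp (hcomp2 (id2 (Fm G Y)) (s X)) (vcomp (assoc2 (Fm G Y) M (Fm F X))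
          (hcomp2 (s Y) (id2 (Fm F X))))))
      = vcomp (s (tens Y X)) (vcomp (hcomp2 (id2 M) (F2 F Y X)) (assoc2 M (Fm F Y) (Fm F X)))) /\
  vcomp (s munit) (vcomp (hcomp2 (id2 M) (F0 F)) (run2_inv M))
    = vcomp (hcomp2 (F0 G) (id2 M)) (lun2_inv M).

Definition left_hom (M N : c1 (Fob F) (Fob G))
    (s : forall X : E, c2 (hcomp1 M (Fm F X)) (hcomp1 (Fm G X) M))
    (t : forall X : E, c2 (hcomp1 N (Fm F X)) (hcomp1 (Fm G X) N))
    (f : c2 M N) : Prop :=
  forall X, vcomp (hcomp2 (id2 (Fm G X)) f) (s X) = vcomp (t X) (hcomp2 f (id2 (Fm F X))).

(* Objects of Z^{w-ps}_r(F,K,G): (M, st), st_X : G(X) o M => M o F(X)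
   (lax natural transformations). *)
Definition right_halfbraiding (M : c1 (Fob F) (Fob G))
    (s : forall X : E, c2 (hcomp1 (Fm G X) M) (hcomp1 M (Fm F X))) : Prop :=
  (forall X Y (f : hom X Y),
      vcomp (hcomp2 (id2 M) (Ff F f)) (s X) = vcomp (s Y) (hcomp2 (Ff G f) (id2 M))) /\
  (forall Y X,
      vcomp (s (tens Y X)) (vcomp (hcomp2 (F2 G Y X) (id2 M)) (assoc2_inv (Fm G Y) (Fm G X) M))
      = vcomp (hcomp2 (id2 M) (F2 F Y X)) (vcomp (assoc2 M (Fm F Y) (Fm F X))
          (vcomp (hcomp2 (s Y) (id2 (Fm F X))) (vcomp (assoc2_inv (Fm G Y) M (Fm F X))
            (hcomp2 (id2 (Fm G Y)) (s X)))))) /\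
  vcomp (s munit) (vcomp (hcomp2 (F0 G) (id2 M)) (lun2_inv M))
    = vcomp (hcomp2 (id2 M) (F0 F)) (run2_inv M).

Definition right_hom (M N : c1 (Fob F) (Fob G))
    (s : forall X : E, c2 (hcomp1 (Fm G X) M) (hcomp1 M (Fm F X)))
    (t : forall X : E, c2 (hcomp1 (Fm G X) N) (hcomp1 N (Fm F X)))
    (f : c2 M N) : Prop :=
  forall X, vcomp (hcomp2 f (id2 (Fm F X))) (s X) = vcomp (t X) (hcomp2 (id2 (Fm G X)) f).

End Centers.

Arguments left_halfbraiding {E K} F G M s.
Arguments right_halfbraiding {E K} F G M s.
Arguments left_hom {E K} F G M N s t f.
Arguments right_hom {E K} F G M N s t f.

(* Main.v *)
Require Import Defs.
From Stdlib Require Import Eqdep.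

Notation "y ** x" := (vcomp y x) (at level 41, right associativity).
Notation "y ## x" := (hcomp2 y x) (at level 36, left associativity).

Section Gen.
Context {K : Bicat}.

Lemma two {a b : K} {g h k : c1 a b} {x : c2 h k} {y : c2 g h} {z : c2 g k} :
  x ** y = z -> forall {f} (r : c2 f g), x ** (y ** r) = z ** r.
Proof. intros H f r. rewrite vcomp_assoc, H. reflexivity. Qed.

Lemma three {a b : K} {g h i k : c1 a b} {x : c2 i k} {y : c2 h i} {w : c2 g h} {z : c2 g k} :
  x ** (y ** w) = z -> forall {f} (r : c2 f g), x ** (y ** (w ** r)) = z ** r.
Proof. intros H f r. rewrite (vcomp_assoc y w r), vcomp_assoc, H. reflexivity. Qed.

Lemma four {a b : K} {g h i j k : c1 a b} {x : c2 j k} {y : c2 i j} {w : c2 h i} {v : c2 g h} {z : c2 g k} :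
  x ** (y ** (w ** v)) = z -> forall {f} (r : c2 f g), x ** (y ** (w ** (v ** r))) = z ** r.
Proof. intros H f r. rewrite (vcomp_assoc w v r), (vcomp_assoc y (w ** v) r),
  vcomp_assoc, H. reflexivity. Qed.

Lemma five {a b : K} {g h i j l k : c1 a b} {x : c2 l k} {x2 : c2 j l} {y : c2 i j} {w : c2 h i} {v : c2 g h} {z : c2 g k} :
  x ** (x2 ** (y ** (w ** v))) = z -> forall {f} (r : c2 f g), x ** (x2 ** (y ** (w ** (v ** r)))) = z ** r.
Proof. intros H f r. rewrite (vcomp_assoc w v r), (vcomp_assoc y (w ** v) r),
  (vcomp_assoc x2 _ r), vcomp_assoc, H. reflexivity. Qed.

Lemma six {a b : K} {g h i j l m k : c1 a b} {x0 : c2 m k} {x : c2 l m} {x2 : c2 j l} {y : c2 i j} {w : c2 h i} {v : c2 g h} {z : c2 g k} :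
  x0 ** (x ** (x2 ** (y ** (w ** v)))) = z -> forall {f} (r : c2 f g), x0 ** (x ** (x2 ** (y ** (w ** (v ** r))))) = z ** r.
Proof. intros H f r. rewrite (vcomp_assoc w v r), (vcomp_assoc y (w ** v) r),
  (vcomp_assoc x2 _ r), (vcomp_assoc x _ r), vcomp_assoc, H. reflexivity. Qed.

End Gen.

Ltac norm := repeat (rewrite <- vcomp_assoc || rewrite vcomp_id_l || rewrite vcomp_id_r || rewrite hcomp2_id).
Ltac norm_in H := repeat (rewrite <- vcomp_assoc in H || rewrite vcomp_id_l in H || rewrite vcomp_id_r in H || rewrite hcomp2_id in H).
Ltac rw H := first [ rewrite (six H) | rewrite (five H) | rewrite (four H) | rewrite (three H) | rewrite (two H) | rewrite H ]; norm.

Section Gen2.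
Context {K : Bicat}.

Lemma wr_v {a b c : K} {g g' g'' : c1 b c} (y' : c2 g' g'') (y : c2 g g') (f : c1 a b) :
  (y' ** y) ## id2 f = (y' ## id2 f) ** (y ## id2 f).
Proof. rewrite <- interchange, vcomp_id_l. reflexivity. Qed.
Lemma wl_v {a b c : K} (g : c1 b c) {f f' f'' : c1 a b} (x' : c2 f' f'') (x : c2 f f') :
  id2 g ## (x' ** x) = (id2 g ## x') ** (id2 g ## x).
Proof. rewrite <- interchange, vcomp_id_l. reflexivity. Qed.
Lemma xch3 {a b c : K} {g g' : c1 b c} {f f' : c1 a b} (y : c2 g g') (x : c2 f f') :
  (id2 g' ## x) ** (y ## id2 f) = (y ## id2 f') ** (id2 g ## x).
Proof. rewrite <- !interchange, !vcomp_id_l, !vcomp_id_r. reflexivity. Qed.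

Lemma swap {a b : K} {f g h k : c1 a b} (p : c2 f g) (p' : c2 g f) (q : c2 h k) (q' : c2 k h)
  (u : c2 g k) (v : c2 f h) : inverse2 p p' -> inverse2 q q' -> u ** p = q ** v -> q' ** u = v ** p'.
Proof.
  intros [Hp1 Hp2] [Hq1 Hq2] H.
  rewrite <- (vcomp_id_r (q' ** u)), <- Hp2.
  rewrite <- !vcomp_assoc, (vcomp_assoc u p p'), H, !vcomp_assoc, Hq1, vcomp_id_l. reflexivity.
Qed.

Lemma inv_sym {a b : K} {f g : c1 a b} (x : c2 f g) y : inverse2 x y -> inverse2 y x.
Proof. intros [H1 H2]; split; assumption. Qed.

Lemma invA {a b c d : K} (h : c1 c d) (g : c1 b c) (f : c1 a b) : inverse2 (assoc2 h g f) (assoc2_inv h g f).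
Proof. split; [apply assoc2_iso1 | apply assoc2_iso2]. Qed.
Lemma invL {a b : K} (f : c1 a b) : inverse2 (lun2 f) (lun2_inv f).
Proof. split; [apply lun2_iso1 | apply lun2_iso2]. Qed.
Lemma invR {a b : K} (f : c1 a b) : inverse2 (run2 f) (run2_inv f).
Proof. split; [apply run2_iso1 | apply run2_iso2]. Qed.

Lemma inv_wr {a b c : K} {g g' : c1 b c} (y : c2 g g') y' (f : c1 a b) :
  inverse2 y y' -> inverse2 (y ## id2 f) (y' ## id2 f).
Proof. intros [H1 H2]; split; rewrite <- wr_v; first [rewrite H1 | rewrite H2]; apply hcomp2_id. Qed.
Lemma inv_wl {a b c : K} (g : c1 b c) {f f' : c1 a b} (x : c2 f f') x' :
  inverse2 x x' -> inverse2 (id2 g ## x) (id2 g ## x').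
Proof. intros [H1 H2]; split; rewrite <- wl_v; first [rewrite H1 | rewrite H2]; apply hcomp2_id. Qed.
Lemma inv_v {a b : K} {f g h : c1 a b} (x : c2 f g) x' (y : c2 g h) y' :
  inverse2 x x' -> inverse2 y y' -> inverse2 (y ** x) (x' ** y').
Proof. intros [H1 H2] [H3 H4]; split; norm.
 - rewrite (two H3). norm. exact H1.
 - rewrite (two H2). norm. exact H4. Qed.

Lemma Ai_nat {a b c d : K} (h h' : c1 c d) (g g' : c1 b c) (f f' : c1 a b)
      (z : c2 h h') (y : c2 g g') (x : c2 f f') :
  assoc2_inv h' g' f' ** (z ## (y ## x)) = ((z ## y) ## x) ** assoc2_inv h g f.
Proof. apply (swap _ _ _ _ _ _ (invA h g f) (invA h' g' f')). symmetry. apply assoc2_nat. Qed.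
Lemma Li_nat {a b : K} (f f' : c1 a b) (x : c2 f f') :
  lun2_inv f' ** x = (id2 (id1 b) ## x) ** lun2_inv f.
Proof. apply (swap _ _ _ _ _ _ (invL f) (invL f')). symmetry. apply lun2_nat. Qed.
Lemma Ri_nat {a b : K} (f f' : c1 a b) (x : c2 f f') :
  run2_inv f' ** x = (x ## id2 (id1 a)) ** run2_inv f.
Proof. apply (swap _ _ _ _ _ _ (invR f) (invR f')). symmetry. apply run2_nat. Qed.

Lemma A_nat_l {a b c d : K} (h h' : c1 c d) (g : c1 b c) (f : c1 a b) (z : c2 h h') :
  assoc2 h' g f ** ((z ## id2 g) ## id2 f) = (z ## id2 (hcomp1 g f)) ** assoc2 h g f.
Proof. rewrite assoc2_nat, hcomp2_id. reflexivity. Qed.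
Lemma A_nat_m {a b c d : K} (h : c1 c d) (g g' : c1 b c) (f : c1 a b) (y : c2 g g') :
  assoc2 h g' f ** ((id2 h ## y) ## id2 f) = (id2 h ## (y ## id2 f)) ** assoc2 h g f.
Proof. rewrite assoc2_nat. reflexivity. Qed.
Lemma A_nat_r {a b c d : K} (h : c1 c d) (g : c1 b c) (f f' : c1 a b) (x : c2 f f') :
  assoc2 h g f' ** (id2 (hcomp1 h g) ## x) = (id2 h ## (id2 g ## x)) ** assoc2 h g f.
Proof. rewrite <- assoc2_nat, hcomp2_id. reflexivity. Qed.
Lemma Ai_nat_l {a b c d : K} (h h' : c1 c d) (g : c1 b c) (f : c1 a b) (z : c2 h h') :
  assoc2_inv h' g f ** (z ## id2 (hcomp1 g f)) = ((z ## id2 g) ## id2 f) ** assoc2_inv h g f.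
Proof. rewrite <- Ai_nat, hcomp2_id. reflexivity. Qed.
Lemma Ai_nat_m {a b c d : K} (h : c1 c d) (g g' : c1 b c) (f : c1 a b) (y : c2 g g') :
  assoc2_inv h g' f ** (id2 h ## (y ## id2 f)) = ((id2 h ## y) ## id2 f) ** assoc2_inv h g f.
Proof. rewrite Ai_nat. reflexivity. Qed.
Lemma Ai_nat_r {a b c d : K} (h : c1 c d) (g : c1 b c) (f f' : c1 a b) (x : c2 f f') :
  assoc2_inv h g f' ** (id2 h ## (id2 g ## x)) = (id2 (hcomp1 h g) ## x) ** assoc2_inv h g f.
Proof. rewrite Ai_nat, hcomp2_id. reflexivity. Qed.

End Gen2.

Section Strict.
Context {K : Bicat}
  (ea : forall (a b c d : K) (h : c1 c d) (g : c1 b c) (f : c1 a b),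
                 hcomp1 (hcomp1 h g) f = hcomp1 h (hcomp1 g f))
  (el : forall (a b : K) (f : c1 a b), hcomp1 (id1 b) f = f)
  (er : forall (a b : K) (f : c1 a b), hcomp1 f (id1 a) = f)
  (HA : forall a b c d (h : c1 c d) (g : c1 b c) (f : c1 a b),
        assoc2 h g f = idtoiso2 (ea a b c d h g f))
  (HL : forall a b (f : c1 a b), lun2 f = idtoiso2 (el a b f))
  (HR : forall a b (f : c1 a b), run2 f = idtoiso2 (er a b f)).

Definition heq {a b c : K} {g g' : c1 b c} {f f' : c1 a b} (e1 : g = g') (e2 : f = f') :
  hcomp1 g f = hcomp1 g' f' :=
  match e1 in _ = g2 return hcomp1 g f = hcomp1 g2 f' with eq_refl =>
  match e2 in _ = f2 return hcomp1 g f = hcomp1 g f2 with eq_refl => eq_refl end end.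

Lemma v_I {a b : K} {f g h : c1 a b} (e1 : f = g) (e2 : g = h) :
  idtoiso2 e2 ** idtoiso2 e1 = idtoiso2 (eq_trans e1 e2).
Proof. destruct e2. simpl. apply vcomp_id_l. Qed.
Lemma h_I {a b c : K} {g g' : c1 b c} {f f' : c1 a b} (e1 : g = g') (e2 : f = f') :
  idtoiso2 e1 ## idtoiso2 e2 = idtoiso2 (heq e1 e2).
Proof. destruct e1, e2. rewrite hcomp2_id. reflexivity. Qed.
Lemma id_I {a b : K} (f : c1 a b) : id2 f = idtoiso2 (eq_refl f).
Proof. reflexivity. Qed.
Lemma uip_I {a b : K} {f g : c1 a b} (e1 e2 : f = g) : idtoiso2 e1 = idtoiso2 e2.
Proof. rewrite (UIP _ _ _ e1 e2). reflexivity. Qed.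
Lemma inv_I {a b : K} {f g : c1 a b} (x : c2 f g) (y : c2 g f) (e : f = g) :
  y ** x = id2 f -> x = idtoiso2 e -> y = idtoiso2 (eq_sym e).
Proof.
  intros H1 H2. rewrite <- (vcomp_id_r y). replace (id2 g) with (x ** idtoiso2 (eq_sym e)).
  - rewrite vcomp_assoc, H1, vcomp_id_l. reflexivity.
  - rewrite H2, v_I. destruct e. reflexivity.
Qed.
Lemma Ai_I {a b c d : K} (h : c1 c d) (g : c1 b c) (f : c1 a b) :
  assoc2_inv h g f = idtoiso2 (eq_sym (ea a b c d h g f)).
Proof. apply (inv_I (assoc2 h g f)); [apply assoc2_iso1 | apply HA]. Qed.
Lemma Li_I {a b : K} (f : c1 a b) : lun2_inv f = idtoiso2 (eq_sym (el a b f)).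
Proof. apply (inv_I (lun2 f)); [apply lun2_iso1 | apply HL]. Qed.
Lemma Ri_I {a b : K} (f : c1 a b) : run2_inv f = idtoiso2 (eq_sym (er a b f)).
Proof. apply (inv_I (run2 f)); [apply run2_iso1 | apply HR]. Qed.

Ltac coh := rewrite ?HA, ?Ai_I, ?HL, ?Li_I, ?HR, ?Ri_I, ?id_I;
  repeat (rewrite v_I || rewrite h_I); apply uip_I.

Section L.
Context {a b : K} (M : c1 a b) (Fx Fr : c1 a a) (Gx Gr : c1 b b).

Lemma c_pent : assoc2 M (hcomp1 Fx Fr) Fx ** (assoc2 M Fx Fr ## id2 Fx) ** assoc2_inv (hcomp1 M Fx) Fr Fx
  = (id2 M ## assoc2_inv Fx Fr Fx) ** assoc2 M Fx (hcomp1 Fr Fx).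
Proof. coh. Qed.
Lemma c_ri : assoc2 M Fx (id1 _) ** run2_inv (hcomp1 M Fx) = id2 M ## run2_inv Fx.
Proof. coh. Qed.
Lemma c1' : run2_inv (hcomp1 Gx M) = assoc2_inv Gx M (id1 _) ** (id2 Gx ## run2_inv M).
Proof. coh. Qed.
Lemma c2' : (assoc2 Gx M Fr ## id2 Fx) ** assoc2_inv (hcomp1 Gx M) Fr Fx ** assoc2_inv Gx M (hcomp1 Fr Fx)
  = assoc2_inv Gx (hcomp1 M Fr) Fx ** (id2 Gx ## assoc2_inv M Fr Fx).
Proof. coh. Qed.
Lemma c3' : (assoc2_inv Gx Gr M ## id2 Fx) ** assoc2_inv Gx (hcomp1 Gr M) Fx
  = assoc2_inv (hcomp1 Gx Gr) M Fx ** assoc2_inv Gx Gr (hcomp1 M Fx) ** (id2 Gx ## assoc2 Gr M Fx).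
Proof. coh. Qed.
Lemma c4' : (lun2 M ## id2 Fx) ** assoc2_inv (id1 _) M Fx = lun2 (hcomp1 M Fx).
Proof. coh. Qed.
Lemma c5' : lun2 (hcomp1 Gx M) = (lun2 Gx ## id2 M) ** assoc2_inv (id1 _) Gx M.
Proof. coh. Qed.
Lemma c6' : assoc2_inv (hcomp1 Gx Gr) Gx M ** assoc2_inv Gx Gr (hcomp1 Gx M) ** (id2 Gx ## assoc2 Gr Gx M)
  = (assoc2_inv Gx Gr Gx ## id2 M) ** assoc2_inv Gx (hcomp1 Gr Gx) M.
Proof. coh. Qed.
Lemma c7' : assoc2_inv Gx (id1 _) M ** (id2 Gx ## lun2_inv M) = run2_inv Gx ## id2 M.
Proof. coh. Qed.
Lemma lemL (ηF : c2 (id1 a) (hcomp1 Fr Fx)) (εF : c2 (hcomp1 Fx Fr) (id1 a))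
  (ηG : c2 (id1 b) (hcomp1 Gr Gx)) (εG : c2 (hcomp1 Gx Gr) (id1 b))
  (TF : lun2 Fx ** (εF ## id2 Fx) ** assoc2_inv Fx Fr Fx ** (id2 Fx ## ηF) ** run2_inv Fx = id2 Fx)
  (TG : lun2 Gx ** (εG ## id2 Gx) ** assoc2_inv Gx Gr Gx ** (id2 Gx ## ηG) ** run2_inv Gx = id2 Gx)
  (σ : c2 (hcomp1 M Fx) (hcomp1 Gx M)) (ρ : c2 (hcomp1 M Fr) (hcomp1 Gr M))
  (Hs : assoc2_inv Gr Gx M ** (id2 Gr ## σ) ** assoc2 Gr M Fx ** (ρ ## id2 Fx) ** assoc2_inv M Fr Fx
        ** (id2 M ## ηF) ** run2_inv M = (ηG ## id2 M) ** lun2_inv M)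
  (Hss : lun2 M ** (εG ## id2 M) ** assoc2_inv Gx Gr M ** (id2 Gx ## ρ) ** assoc2 Gx M Fr ** (σ ## id2 Fr)
        = run2 M ** (id2 M ## εF) ** assoc2 M Fx Fr) :
  iso2 σ.
Proof.
  exists (((lun2 M ** (εG ## id2 M) ** assoc2_inv Gx Gr M ** (id2 Gx ## ρ) ** assoc2 Gx M Fr) ## id2 Fx)
     ** assoc2_inv (hcomp1 Gx M) Fr Fx ** (id2 (hcomp1 Gx M) ## ηF) ** run2_inv (hcomp1 Gx M)).
  split.
  - norm. rw (Ri_nat _ _ σ). rw (xch3 σ ηF). rw (Ai_nat_l _ _ Fr Fx σ).
    rewrite (two (eq_sym (wr_v _ (σ ## id2 Fr) Fx))). norm. rewrite Hss.
    rewrite !wr_v. norm. rewrite <- triangle2. norm.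
    rw (A_nat_m M _ _ Fx εF). rw c_pent. rw (A_nat_r M Fx _ _ ηF). rw c_ri.
    repeat rewrite <- wl_v. rewrite TF. apply hcomp2_id.
  - repeat rewrite wr_v. norm. rewrite c1'. norm.
    rw (eq_sym (Ai_nat_r Gx M _ _ ηF)). rw c2'. rw (eq_sym (Ai_nat_m Gx _ _ Fx ρ)). rw c3'.
    rw (eq_sym (Ai_nat_l _ _ M Fx εG)). rw c4'. rw (eq_sym (lun2_nat σ)). rw (xch3 εG σ).
    rw (eq_sym (Ai_nat_r Gx Gr _ _ σ)).
    assert (Hs2 : (id2 Gr ## σ) ** assoc2 Gr M Fx ** (ρ ## id2 Fx) ** assoc2_inv M Fr Fx
        ** (id2 M ## ηF) ** run2_inv M = assoc2 Gr Gx M ** (ηG ## id2 M) ** lun2_inv M).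
    { rewrite <- Hs. norm. rw (assoc2_iso2 Gr Gx M). reflexivity. }
    repeat rewrite <- wl_v. rewrite Hs2. repeat rewrite wl_v. rewrite c5'. norm.
    rw (Ai_nat_l _ _ Gx M εG). rw c6'. rw (Ai_nat_m Gx _ _ M ηG). rw c7'.
    repeat rewrite <- wr_v. rewrite TG. apply hcomp2_id.
Qed.
End L.
End Strict.

Section R.
Context {K : Bicat}
  (ea : forall (a b c d : K) (h : c1 c d) (g : c1 b c) (f : c1 a b),
                 hcomp1 (hcomp1 h g) f = hcomp1 h (hcomp1 g f))
  (el : forall (a b : K) (f : c1 a b), hcomp1 (id1 b) f = f)
  (er : forall (a b : K) (f : c1 a b), hcomp1 f (id1 a) = f)
  (HA : forall a b c d (h : c1 c d) (g : c1 b c) (f : c1 a b),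
        assoc2 h g f = idtoiso2 (ea a b c d h g f))
  (HL : forall a b (f : c1 a b), lun2 f = idtoiso2 (el a b f))
  (HR : forall a b (f : c1 a b), run2 f = idtoiso2 (er a b f)).

Ltac coh := rewrite ?HA, ?(Ai_I ea HA), ?HL, ?(Li_I el HL), ?HR, ?(Ri_I er HR), ?id_I;
  repeat (rewrite v_I || rewrite h_I); apply uip_I.

Context {a b : K} (M : c1 a b) (Fx Fl : c1 a a) (Gx Gl : c1 b b).

Lemma d1 : id2 Gx ## lun2 M = (run2 Gx ## id2 M) ** assoc2_inv Gx (id1 _) M. Proof. coh. Qed.
Lemma d2 : assoc2_inv Gx (hcomp1 Gl Gx) M ** (id2 Gx ## assoc2_inv Gl Gx M) ** assoc2 Gx Gl (hcomp1 Gx M)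
  = (assoc2 Gx Gl Gx ## id2 M) ** assoc2_inv (hcomp1 Gx Gl) Gx M. Proof. coh. Qed.
Lemma d3 : assoc2_inv (id1 _) Gx M ** lun2_inv (hcomp1 Gx M) = lun2_inv Gx ## id2 M. Proof. coh. Qed.
Lemma e1 : lun2_inv (hcomp1 M Fx) = assoc2 (id1 _) M Fx ** (lun2_inv M ## id2 Fx). Proof. coh. Qed.
Lemma e2 : (id2 Gx ## assoc2_inv Gl M Fx) ** assoc2 Gx Gl (hcomp1 M Fx) ** assoc2 (hcomp1 Gx Gl) M Fx
  = assoc2 Gx (hcomp1 Gl M) Fx ** (assoc2 Gx Gl M ## id2 Fx). Proof. coh. Qed.
Lemma e3 : (id2 Gx ## assoc2 M Fl Fx) ** assoc2 Gx (hcomp1 M Fl) Fx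
  = assoc2 Gx M (hcomp1 Fl Fx) ** assoc2 (hcomp1 Gx M) Fl Fx ** (assoc2_inv Gx M Fl ## id2 Fx). Proof. coh. Qed.
Lemma e4 : (id2 Gx ## run2 M) ** assoc2 Gx M (id1 _) = run2 (hcomp1 Gx M). Proof. coh. Qed.
Lemma e5 : run2 (hcomp1 M Fx) = (id2 M ## run2 Fx) ** assoc2 M Fx (id1 _). Proof. coh. Qed.
Lemma e6 : assoc2 M Fx (hcomp1 Fl Fx) ** assoc2 (hcomp1 M Fx) Fl Fx ** (assoc2_inv M Fx Fl ## id2 Fx)
  = (id2 M ## assoc2 Fx Fl Fx) ** assoc2 M (hcomp1 Fx Fl) Fx. Proof. coh. Qed.
Lemma e7 : assoc2 M (id1 _) Fx ** (run2_inv M ## id2 Fx) = id2 M ## lun2_inv Fx. Proof. coh. Qed.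

Lemma lemR (ηF : c2 (id1 a) (hcomp1 Fx Fl)) (εF : c2 (hcomp1 Fl Fx) (id1 a))
  (ηG : c2 (id1 b) (hcomp1 Gx Gl)) (εG : c2 (hcomp1 Gl Gx) (id1 b))
  (TF : run2 Fx ** (id2 Fx ## εF) ** assoc2 Fx Fl Fx ** (ηF ## id2 Fx) ** lun2_inv Fx = id2 Fx)
  (TG : run2 Gx ** (id2 Gx ## εG) ** assoc2 Gx Gl Gx ** (ηG ## id2 Gx) ** lun2_inv Gx = id2 Gx)
  (s : c2 (hcomp1 Gx M) (hcomp1 M Fx)) (t : c2 (hcomp1 Gl M) (hcomp1 M Fl))
  (H3 : assoc2 M Fx Fl ** (s ## id2 Fl) ** assoc2_inv Gx M Fl ** (id2 Gx ## t) ** assoc2 Gx Gl M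
        ** (ηG ## id2 M) ** lun2_inv M = (id2 M ## ηF) ** run2_inv M)
  (H4 : run2 M ** (id2 M ## εF) ** assoc2 M Fl Fx ** (t ## id2 Fx) ** assoc2_inv Gl M Fx ** (id2 Gl ## s)
        = lun2 M ** (εG ## id2 M) ** assoc2_inv Gl Gx M) :
  iso2 s.
Proof.
  exists ((id2 Gx ## (run2 M ** (id2 M ## εF) ** assoc2 M Fl Fx ** (t ## id2 Fx) ** assoc2_inv Gl M Fx))
     ** assoc2 Gx Gl (hcomp1 M Fx) ** (ηG ## id2 (hcomp1 M Fx)) ** lun2_inv (hcomp1 M Fx)).
  split.
  - norm. rw (Li_nat _ _ s). rw (eq_sym (xch3 ηG s)). rw (A_nat_r Gx Gl _ _ s).
    rewrite (two (eq_sym (wl_v Gx _ (id2 Gl ## s)))). norm. rewrite H4.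
    rewrite !wl_v. norm. rewrite d1. norm.
    rw (Ai_nat_m Gx _ _ M εG). rw d2. rw (Ai_nat_l _ _ Gx M ηG). rw d3.
    repeat rewrite <- wr_v. rewrite TG. apply hcomp2_id.
  - repeat rewrite wl_v. norm. rewrite e1. norm.
    rw (eq_sym (A_nat_l _ _ M Fx ηG)). rw e2. rw (eq_sym (A_nat_m Gx _ _ Fx t)). rw e3.
    rw (eq_sym (A_nat_r Gx M _ _ εF)). rw e4. rw (eq_sym (run2_nat s)). rw (eq_sym (xch3 s εF)).
    rw (eq_sym (A_nat_l _ _ Fl Fx s)).
    assert (H3' : (s ## id2 Fl) ** assoc2_inv Gx M Fl ** (id2 Gx ## t) ** assoc2 Gx Gl M
        ** (ηG ## id2 M) ** lun2_inv M = assoc2_inv M Fx Fl ** (id2 M ## ηF) ** run2_inv M).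
    { rewrite <- H3. norm. rw (assoc2_iso1 M Fx Fl). reflexivity. }
    repeat rewrite <- wr_v. rewrite H3'. repeat rewrite wr_v. rewrite e5. norm.
    rw (A_nat_r M Fx _ _ εF). rw e6. rw (A_nat_m M _ _ Fx ηF). rw e7.
    repeat rewrite <- wl_v. rewrite TF. apply hcomp2_id.
Qed.
End R.

Ltac cancel H := first [ rw (proj1 H) | rw (proj2 H) ].

Lemma vinj_l {K : Bicat} {a b : K} {f g h : c1 a b} (x : c2 g h) (y : c2 h g) (z1 z2 : c2 f g) :
  inverse2 x y -> x ** z1 = x ** z2 -> z1 = z2.
Proof. intros [H1 _] H. rewrite <- (vcomp_id_l z1), <- (vcomp_id_l z2), <- H1, <- !vcomp_assoc, H. reflexivity. Qed.

Section PF.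
Context {E : MonCat} {K : Bicat} (F : PseudoFun E K).

Lemma Ffinv {X Y : E} (f : hom X Y) (g : hom Y X) :
  comp g f = idm X -> comp f g = idm Y -> inverse2 (Ff F f) (Ff F g).
Proof. intros H1 H2; split; rewrite <- Ff_comp; [rewrite H1 | rewrite H2]; apply Ff_id. Qed.

Lemma PF_tri1 (X r : E) η ε (Hd : is_duality X r η ε) p1i p0i
  (Hp1 : inverse2 (F2 F r X) p1i) (Hp0 : inverse2 (F0 F) p0i) :
  lun2 (Fm F X) ** ((p0i ** Ff F ε ** F2 F X r) ## id2 (Fm F X)) ** assoc2_inv (Fm F X) (Fm F r) (Fm F X)
   ** (id2 (Fm F X) ## (p1i ** Ff F η ** F0 F)) ** run2_inv (Fm F X) = id2 (Fm F X).
Proof.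
  destruct Hd as [Hd1 _].
  destruct (F2_iso F (tens X r) X) as [q1 Hq1]. destruct (F2_iso F munit X) as [q2 Hq2].
  assert (FA : (q1 ** Ff F (massoc_inv X r X)) ** F2 F X (tens r X)
     = (F2 F X r ## id2 (Fm F X)) ** (assoc2_inv (Fm F X) (Fm F r) (Fm F X) ** (id2 (Fm F X) ## p1i))).
  { eapply swap.
    - apply inv_sym, inv_v; [apply inv_wl, inv_sym, Hp1 | apply inv_sym, invA].
    - apply inv_sym, inv_v; [apply Ffinv; [apply massoc_iso2 | apply massoc_iso1] | apply inv_sym, Hq1].
    - rewrite <- vcomp_assoc. symmetry. apply F_assoc. }
  norm_in FA.
  assert (N2 : (Ff F ε ## id2 (Fm F X)) ** q1 = q2 ** Ff F (tensm ε (idm X))).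
  { symmetry. eapply swap; [exact Hq1 | exact Hq2 | ]. rewrite F2_nat, Ff_id. reflexivity. }
  assert (N3 : F2 F X (tens r X) ** (id2 (Fm F X) ## Ff F η) = Ff F (tensm (idm X) η) ** F2 F X munit).
  { rewrite F2_nat, Ff_id. reflexivity. }
  assert (H5 : F2 F X munit ** (id2 (Fm F X) ## F0 F) ** run2_inv (Fm F X) = Ff F (mrun_inv X)).
  { apply (vinj_l _ _ _ _ (Ffinv (mrun X) (mrun_inv X) (mrun_iso1 X) (mrun_iso2 X))).
    norm. rw (F_runit F X). rewrite run2_iso2. symmetry. rewrite <- Ff_comp, mrun_iso2. apply Ff_id. }
  assert (H4 : lun2 (Fm F X) ** (p0i ## id2 (Fm F X)) ** q2 = Ff F (mlun X)).
  { rewrite <- (F_lunit F X). norm. cancel (inv_wr _ _ (Fm F X) Hp0). cancel Hq2. reflexivity. }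
  repeat rewrite wr_v. repeat rewrite wl_v. norm.
  rw (eq_sym FA). rw N2. rw N3. rw H5. rw H4.
  repeat rewrite <- Ff_comp. rewrite Hd1. apply Ff_id.
Qed.

Lemma PF_tri2 (X l : E) η ε (Hd : is_duality l X η ε) p1i p0i
  (Hp1 : inverse2 (F2 F X l) p1i) (Hp0 : inverse2 (F0 F) p0i) :
  run2 (Fm F X) ** (id2 (Fm F X) ## (p0i ** Ff F ε ** F2 F l X)) ** assoc2 (Fm F X) (Fm F l) (Fm F X)
   ** ((p1i ** Ff F η ** F0 F) ## id2 (Fm F X)) ** lun2_inv (Fm F X) = id2 (Fm F X).
Proof.
  destruct Hd as [_ Hd2].
  destruct (F2_iso F X (tens l X)) as [q1 Hq1]. destruct (F2_iso F X munit) as [q2 Hq2].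
  assert (FA : q1 ** (Ff F (massoc X l X) ** F2 F (tens X l) X)
     = ((id2 (Fm F X) ## F2 F l X) ** assoc2 (Fm F X) (Fm F l) (Fm F X)) ** (p1i ## id2 (Fm F X))).
  { eapply swap; [apply inv_wr, Hp1 | exact Hq1 | ].
    rewrite <- vcomp_assoc. apply F_assoc. }
  norm_in FA.
  assert (N2 : (id2 (Fm F X) ## Ff F ε) ** q1 = q2 ** Ff F (tensm (idm X) ε)).
  { symmetry. eapply swap; [exact Hq1 | exact Hq2 | ]. rewrite F2_nat, Ff_id. reflexivity. }
  assert (N3 : F2 F (tens X l) X ** (Ff F η ## id2 (Fm F X)) = Ff F (tensm η (idm X)) ** F2 F munit X).
  { rewrite F2_nat, Ff_id. reflexivity. }
  assert (H5 : F2 F munit X ** (F0 F ## id2 (Fm F X)) ** lun2_inv (Fm F X) = Ff F (mlun_inv X)).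
  { apply (vinj_l _ _ _ _ (Ffinv (mlun X) (mlun_inv X) (mlun_iso1 X) (mlun_iso2 X))).
    norm. rw (F_lunit F X). rewrite lun2_iso2. symmetry. rewrite <- Ff_comp, mlun_iso2. apply Ff_id. }
  assert (H4 : run2 (Fm F X) ** (id2 (Fm F X) ## p0i) ** q2 = Ff F (mrun X)).
  { rewrite <- (F_runit F X). norm. cancel (inv_wl (Fm F X) _ _ Hp0). cancel Hq2. reflexivity. }
  repeat rewrite wr_v. repeat rewrite wl_v. norm.
  rw (eq_sym FA). rw N2. rw N3. rw H5. rw H4.
  repeat rewrite <- Ff_comp. rewrite Hd2. apply Ff_id.
Qed.
End PF.

Section HB.
Context {E : MonCat} {K : Bicat} (F G : PseudoFun E K) (M : c1 (Fob F) (Fob G)).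

Lemma starL (s : forall X : E, c2 (hcomp1 M (Fm F X)) (hcomp1 (Fm G X) M))
  (HB : left_halfbraiding F G M s) (X r : E) (η : hom munit (tens r X)) p1i g1i
  (Hp1 : inverse2 (F2 F r X) p1i) (Hg1 : inverse2 (F2 G r X) g1i) :
  assoc2_inv (Fm G r) (Fm G X) M ** (id2 (Fm G r) ## s X) ** assoc2 (Fm G r) M (Fm F X)
   ** (s r ## id2 (Fm F X)) ** assoc2_inv M (Fm F r) (Fm F X)
   ** (id2 M ## (p1i ** Ff F η ** F0 F)) ** run2_inv M
  = ((g1i ** Ff G η ** F0 G) ## id2 M) ** lun2_inv M.
Proof.
  destruct HB as [HN [HH HU]].
  assert (H2 : assoc2_inv (Fm G r) (Fm G X) M ** (id2 (Fm G r) ## s X) ** assoc2 (Fm G r) M (Fm F X)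
      ** (s r ## id2 (Fm F X)) = (g1i ## id2 M) ** s (tens r X) ** (id2 M ## F2 F r X) ** assoc2 M (Fm F r) (Fm F X)).
  { rewrite <- (HH r X). norm. cancel (inv_wr _ _ M Hg1). reflexivity. }
  repeat rewrite wr_v. repeat rewrite wl_v. norm.
  rw H2. rw (assoc2_iso2 M (Fm F r) (Fm F X)). cancel (inv_wl M _ _ Hp1).
  rw (eq_sym (HN _ _ η)). rw (HU). reflexivity.
Qed.

Lemma sstarL (s : forall X : E, c2 (hcomp1 M (Fm F X)) (hcomp1 (Fm G X) M))
  (HB : left_halfbraiding F G M s) (X r : E) (ε : hom (tens X r) munit) p0i g0i
  (Hp0 : inverse2 (F0 F) p0i) (Hg0 : inverse2 (F0 G) g0i) :
  lun2 M ** ((g0i ** Ff G ε ** F2 G X r) ## id2 M) ** assoc2_inv (Fm G X) (Fm G r) M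
   ** (id2 (Fm G X) ## s r) ** assoc2 (Fm G X) M (Fm F r) ** (s X ## id2 (Fm F r))
  = run2 M ** (id2 M ## (p0i ** Ff F ε ** F2 F X r)) ** assoc2 M (Fm F X) (Fm F r).
Proof.
  destruct HB as [HN [HH HU]].
  assert (U2 : s munit = (F0 G ## id2 M) ** lun2_inv M ** run2 M ** (id2 M ## p0i)).
  { rw (eq_sym HU). rw (run2_iso1 M). cancel (inv_wl M _ _ Hp0). reflexivity. }
  repeat rewrite wr_v. repeat rewrite wl_v. norm.
  rewrite (HH X r). norm. rw (HN _ _ ε). rewrite U2. norm.
  cancel (inv_wr _ _ M Hg0). rw (lun2_iso2 M). reflexivity.
Qed.

Lemma starR (s : forall X : E, c2 (hcomp1 (Fm G X) M) (hcomp1 M (Fm F X)))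
  (HB : right_halfbraiding F G M s) (X l : E) (η : hom munit (tens X l)) p1i g1i
  (Hp1 : inverse2 (F2 F X l) p1i) (Hg1 : inverse2 (F2 G X l) g1i) :
  assoc2 M (Fm F X) (Fm F l) ** (s X ## id2 (Fm F l)) ** assoc2_inv (Fm G X) M (Fm F l)
   ** (id2 (Fm G X) ## s l) ** assoc2 (Fm G X) (Fm G l) M
   ** ((g1i ** Ff G η ** F0 G) ## id2 M) ** lun2_inv M
  = (id2 M ## (p1i ** Ff F η ** F0 F)) ** run2_inv M.
Proof.
  destruct HB as [HN [HH HU]].
  assert (H2 : assoc2 M (Fm F X) (Fm F l) ** (s X ## id2 (Fm F l)) ** assoc2_inv (Fm G X) M (Fm F l)
      ** (id2 (Fm G X) ## s l) = (id2 M ## p1i) ** s (tens X l) ** (F2 G X l ## id2 M) ** assoc2_inv (Fm G X) (Fm G l) M).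
  { rewrite (HH X l). norm. cancel (inv_wl M _ _ Hp1). reflexivity. }
  repeat rewrite wr_v. repeat rewrite wl_v. norm.
  rw H2. rw (assoc2_iso1 (Fm G X) (Fm G l) M). cancel (inv_wr _ _ M Hg1).
  rw (eq_sym (HN _ _ η)). rw (HU). reflexivity.
Qed.

Lemma sstarR (s : forall X : E, c2 (hcomp1 (Fm G X) M) (hcomp1 M (Fm F X)))
  (HB : right_halfbraiding F G M s) (X l : E) (ε : hom (tens l X) munit) p0i g0i
  (Hp0 : inverse2 (F0 F) p0i) (Hg0 : inverse2 (F0 G) g0i) :
  run2 M ** (id2 M ## (p0i ** Ff F ε ** F2 F l X)) ** assoc2 M (Fm F l) (Fm F X)
   ** (s l ## id2 (Fm F X)) ** assoc2_inv (Fm G l) M (Fm F X) ** (id2 (Fm G l) ## s X)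
  = lun2 M ** ((g0i ** Ff G ε ** F2 G l X) ## id2 M) ** assoc2_inv (Fm G l) (Fm G X) M.
Proof.
  destruct HB as [HN [HH HU]].
  assert (U2 : s munit = (id2 M ## F0 F) ** run2_inv M ** lun2 M ** (g0i ## id2 M)).
  { rw (eq_sym HU). rw (lun2_iso1 M). cancel (inv_wr _ _ M Hg0). reflexivity. }
  repeat rewrite wr_v. repeat rewrite wl_v. norm.
  rewrite <- (HH l X). norm. rw (HN _ _ ε). rewrite U2. norm.
  cancel (inv_wl M _ _ Hp0). rw (run2_iso2 M). reflexivity.
Qed.
End HB.

Section P34.
Context {E : MonCat} {K : Bicat} (F G : PseudoFun E K).

Lemma invR3 (M : c1 (Fob F) (Fob G))
  (s : forall X : E, c2 (hcomp1 M (Fm F X)) (hcomp1 (Fm G X) M))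
  (s' : forall X : E, c2 (hcomp1 (Fm G X) M) (hcomp1 M (Fm F X)))
  (Hinv : forall X, inverse2 (s X) (s' X)) (Y X : E) :
  inverse2 ((id2 (Fm G Y) ## s X) ** assoc2 (Fm G Y) M (Fm F X) ** (s Y ## id2 (Fm F X)))
           ((s' Y ## id2 (Fm F X)) ** assoc2_inv (Fm G Y) M (Fm F X) ** (id2 (Fm G Y) ## s' X)).
Proof.
  split; norm.
  - cancel (inv_wl (Fm G Y) _ _ (Hinv X)). cancel (invA (Fm G Y) M (Fm F X)).
    apply (proj1 (inv_wr _ _ (Fm F X) (Hinv Y))).
  - cancel (inv_wr _ _ (Fm F X) (Hinv Y)). cancel (invA (Fm G Y) M (Fm F X)).
    apply (proj2 (inv_wl (Fm G Y) _ _ (Hinv X))).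
Qed.

Lemma part3 (M : c1 (Fob F) (Fob G))
  (s : forall X : E, c2 (hcomp1 M (Fm F X)) (hcomp1 (Fm G X) M))
  (s' : forall X : E, c2 (hcomp1 (Fm G X) M) (hcomp1 M (Fm F X))) :
  (forall X, inverse2 (s X) (s' X)) ->
  (left_halfbraiding F G M s <-> right_halfbraiding F G M s').
Proof.
  intros Hinv. split.
  - intros [HN [HH HU]]. split; [|split].
    + intros X Y f. symmetry. eapply swap; [apply Hinv | apply Hinv | apply HN].
    + intros Y X. 
      assert (H := swap _ _ _ _ ((F2 G Y X ## id2 M) ** assoc2_inv (Fm G Y) (Fm G X) M)
                   ((id2 M ## F2 F Y X) ** assoc2 M (Fm F Y) (Fm F X))
                   (invR3 M s s' Hinv Y X) (Hinv (tens Y X))).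
      norm_in H. apply H. norm. apply HH.
    + rewrite <- HU. norm. cancel (Hinv munit). reflexivity.
  - intros [HN [HH HU]]. split; [|split].
    + intros X Y f. symmetry. eapply swap; [apply inv_sym, Hinv | apply inv_sym, Hinv | apply HN].
    + intros Y X.
      assert (H := swap _ _ _ _ ((id2 M ## F2 F Y X) ** assoc2 M (Fm F Y) (Fm F X))
                   ((F2 G Y X ## id2 M) ** assoc2_inv (Fm G Y) (Fm G X) M)
                   (inv_sym _ _ (invR3 M s s' Hinv Y X)) (inv_sym _ _ (Hinv (tens Y X)))).
      norm_in H. symmetry. apply H. norm. symmetry. apply HH.
    + rewrite <- HU. norm. cancel (Hinv munit). reflexivity.
Qed.

Lemma part4 (M N : c1 (Fob F) (Fob G))
  (s : forall X : E, c2 (hcomp1 M (Fm F X)) (hcomp1 (Fm G X) M))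
  (s' : forall X : E, c2 (hcomp1 (Fm G X) M) (hcomp1 M (Fm F X)))
  (t : forall X : E, c2 (hcomp1 N (Fm F X)) (hcomp1 (Fm G X) N))
  (t' : forall X : E, c2 (hcomp1 (Fm G X) N) (hcomp1 N (Fm F X)))
  (f : c2 M N) :
  (forall X, inverse2 (s X) (s' X)) -> (forall X, inverse2 (t X) (t' X)) ->
  (left_hom F G M N s t f <-> right_hom F G M N s' t' f).
Proof.
  intros Hs Ht. split; intros H X.
  - symmetry. eapply swap; [apply Hs | apply Ht | apply H].
  - symmetry. eapply swap; [apply inv_sym, Hs | apply inv_sym, Ht | apply H].
Qed.
End P34.

Theorem proposition3p14 :
  forall (K : Bicat) (E : MonCat),
    is_strict2 K -> autonomous_bicat K -> autonomous_moncat E ->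
    forall F G : PseudoFun E K,
      (* Z^{w-ps}_l = Z^{s-ps}_l : every left half-braiding is invertible *)
      (forall (M : c1 (Fob F) (Fob G))
              (s : forall X : E, c2 (hcomp1 M (Fm F X)) (hcomp1 (Fm G X) M)),
          left_halfbraiding F G M s -> forall X, iso2 (s X)) /\
      (* Z^{w-ps}_r = Z^{s-ps}_r : every right half-braiding is invertible *)
      (forall (M : c1 (Fob F) (Fob G))
              (s : forall X : E, c2 (hcomp1 (Fm G X) M) (hcomp1 M (Fm F X))),
          right_halfbraiding F G M s -> forall X, iso2 (s X)) /\
      (* (M, sigma) |-> (M, sigma^{-1}) is a bijection on objects Z^s_l <-> Z^s_r *)
      (forall (M : c1 (Fob F) (Fob G))
              (s : forall X : E, c2 (hcomp1 M (Fm F X)) (hcomp1 (Fm G X) M))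
              (s' : forall X : E, c2 (hcomp1 (Fm G X) M) (hcomp1 M (Fm F X))),
          (forall X, inverse2 (s X) (s' X)) ->
          (left_halfbraiding F G M s <-> right_halfbraiding F G M s')) /\
      (* ... and is identity (hence bijective) on morphisms *)
      (forall (M N : c1 (Fob F) (Fob G))
              (s : forall X : E, c2 (hcomp1 M (Fm F X)) (hcomp1 (Fm G X) M))
              (s' : forall X : E, c2 (hcomp1 (Fm G X) M) (hcomp1 M (Fm F X)))
              (t : forall X : E, c2 (hcomp1 N (Fm F X)) (hcomp1 (Fm G X) N))
              (t' : forall X : E, c2 (hcomp1 (Fm G X) N) (hcomp1 N (Fm F X)))
              (f : c2 M N),
          left_halfbraiding F G M s -> left_halfbraiding F G N t ->
          (forall X, inverse2 (s X) (s' X)) -> (forall X, inverse2 (t X) (t' X)) ->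
          (left_hom F G M N s t f <-> right_hom F G M N s' t' f)).
Proof.
Proof.
  intros K E Hstr HK HE F G.
  destruct Hstr as [ea [el [er [HA [HL HR]]]]].
  split; [|split; [|split]].
  - intros M s Hs X.
    destruct (HE X) as [[r [η [ε Hd]]] _].
    destruct (F2_iso F r X) as [p1i Hp1]. destruct (F2_iso G r X) as [g1i Hg1].
    destruct (F0_iso F) as [p0i Hp0]. destruct (F0_iso G) as [g0i Hg0].
    exact (lemL ea el er HA HL HR M (Fm F X) (Fm F r) (Fm G X) (Fm G r)
      (p1i ** Ff F η ** F0 F) (p0i ** Ff F ε ** F2 F X r)
      (g1i ** Ff G η ** F0 G) (g0i ** Ff G ε ** F2 G X r)
      (PF_tri1 F X r η ε Hd p1i p0i Hp1 Hp0) (PF_tri1 G X r η ε Hd g1i g0i Hg1 Hg0)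
      (s X) (s r) (starL F G M s Hs X r η p1i g1i Hp1 Hg1)
      (sstarL F G M s Hs X r ε p0i g0i Hp0 Hg0)).
  - intros M s Hs X.
    destruct (HE X) as [_ [l [η [ε Hd]]]].
    destruct (F2_iso F X l) as [p1i Hp1]. destruct (F2_iso G X l) as [g1i Hg1].
    destruct (F0_iso F) as [p0i Hp0]. destruct (F0_iso G) as [g0i Hg0].
    exact (lemR ea el er HA HL HR M (Fm F X) (Fm F l) (Fm G X) (Fm G l)
      (p1i ** Ff F η ** F0 F) (p0i ** Ff F ε ** F2 F l X)
      (g1i ** Ff G η ** F0 G) (g0i ** Ff G ε ** F2 G l X)
      (PF_tri2 F X l η ε Hd p1i p0i Hp1 Hp0) (PF_tri2 G X l η ε Hd g1i g0i Hg1 Hg0)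
      (s X) (s l) (starR F G M s Hs X l η p1i g1i Hp1 Hg1)
      (sstarR F G M s Hs X l ε p0i g0i Hp0 Hg0)).
  - intros M s s' Hinv. apply part3; exact Hinv.
  - intros M N s s' t t' f _ _ Hs Ht. apply part4; assumption.
Qed.
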